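(* Let $L>0$ and $V\in C^0([0,L];\mathbb{R})$, and assume there is $\mathbf{x}_0\in(0,L)$ such that $V$ is strictly decreasing on $[0,\mathbf{x}_0]$ and strictly increasing on $[\mathbf{x}_0,L]$. Then the functions $x_\pm:[E_0,\infty)\to[0,L]$ are uniformly continuous, the function $\mathbb{R}\times[0,L]\to\mathbb{R}$, $(E,x)\mapsto d_{A,E}(x)$ is uniformly continuous, and there is $C>0$ such that for every $E\in\mathbb{R}$ the map $x\mapsto d_{A,E}(x)$ is $C$-Lipschitz.
   Context: $E_0=\min_{[0,L]}V=V(\mathbf{x}_0)$. For $E\ge E_0$: $x_-(E)$ is the solution of $V(x_-(E))=E$ with $x_-(E)\le\mathbf{x}_0$ if $E\le V(0)$, and $x_-(E)=0$ if $E\ge V(0)$; $x_+(E)$ is the solution of $V(x_+(E))=E$ with $x_+(E)\ge\mathbf{x}_0$ if $E\le V(L)$, and $x_+(E)=L$ if $E\ge V(L)$. For $E\ge E_0$, $K_E=\{V\le E\}$ and $d_{A,E}(x)=\inf_{y\in K_E}\left|\int_y^x\sqrt{(V(s)-E)_+}ds\right|$; for $E<E_0$, $d_{A,E}:=d_{A,E_0}$. *)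

(* Defs.v *)
From Stdlib Require Import Reals Lra ClassicalEpsilon.
From Coquelicot Require Import Coquelicot.
Open Scope R_scope.

Definition cont_on_0L (V : R -> R) (L : R) : Prop :=
  forall x, 0 <= x <= L -> forall eps, 0 < eps -> exists delta, 0 < delta /\
    forall y, 0 <= y <= L -> Rabs (y - x) < delta -> Rabs (V y - V x) < eps.

Definition strict_decr_on (V : R -> R) (a b : R) : Prop :=
  forall x y, a <= x -> x < y -> y <= b -> V y < V x.
Definition strict_incr_on (V : R -> R) (a b : R) : Prop :=
  forall x y, a <= x -> x < y -> y <= b -> V x < V y.

Definition E0 (V : R -> R) (x0 : R) : R := V x0.

Definition x_minus (V : R -> R) (x0 E : R) : R :=
  if Rle_dec E (V 0) then
    epsilon (inhabits 0) (fun x => 0 <= x <= x0 /\ V x = E)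
  else 0.

Definition x_plus (V : R -> R) (L x0 E : R) : R :=
  if Rle_dec E (V L) then
    epsilon (inhabits 0) (fun x => x0 <= x <= L /\ V x = E)
  else L.

Definition K_E (V : R -> R) (L E : R) (y : R) : Prop := 0 <= y <= L /\ V y <= E.

Definition dA_raw (V : R -> R) (L E x : R) : R :=
  real (Glb_Rbar (fun r => exists y, K_E V L E y /\
          r = Rabs (RInt (fun s => sqrt (Rmax (V s - E) 0)) y x))).

Definition dA (V : R -> R) (L x0 E x : R) : R :=
  if Rle_dec (E0 V x0) E then dA_raw V L E x else dA_raw V L (E0 V x0) x.

(* Main.v *)
Require Import Defs.
From Stdlib Require Import Reals Lra ClassicalEpsilon.
From Coquelicot Require Import Coquelicot.
Open Scope R_scope.

Lemma sqrt_sub_add p q : 0 <= p -> 0 <= q -> sqrt (p + q) <= sqrt p + sqrt q.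
Proof.
  intros Hp Hq.
  assert (Hs: 0 <= sqrt p + sqrt q) by (generalize (sqrt_pos p) (sqrt_pos q); lra).
  rewrite <- (sqrt_Rsqr (sqrt p + sqrt q)) by exact Hs.
  apply sqrt_le_1_alt. unfold Rsqr.
  replace ((sqrt p + sqrt q) * (sqrt p + sqrt q)) with
    (sqrt p * sqrt p + sqrt q * sqrt q + 2 * (sqrt p * sqrt q)) by ring.
  rewrite !sqrt_sqrt by lra.
  generalize (Rmult_le_pos _ _ (sqrt_pos p) (sqrt_pos q)); lra.
Qed.

Lemma sqrt_lip u v : Rabs (sqrt (Rmax u 0) - sqrt (Rmax v 0)) <= sqrt (Rabs (u - v)).
Proof.
  assert (H: forall u v, v <= u -> Rabs (sqrt (Rmax u 0) - sqrt (Rmax v 0)) <= sqrt (Rabs (u - v))).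
  { clear u v. intros u v Huv.
    assert (Hm: Rmax v 0 <= Rmax u 0) by (unfold Rmax; repeat destruct Rle_dec; lra).
    generalize (sqrt_le_1_alt _ _ Hm); intro H1.
    rewrite Rabs_right by lra. rewrite Rabs_right by lra.
    assert (Hm2: Rmax u 0 <= Rmax v 0 + (u - v)) by (unfold Rmax; repeat destruct Rle_dec; lra).
    generalize (sqrt_le_1_alt _ _ Hm2); intro H2.
    generalize (sqrt_sub_add (Rmax v 0) (u - v) (Rmax_r _ _) ltac:(lra)). lra. }
  destruct (Rle_dec v u). apply H; lra.
  rewrite Rabs_minus_sym, (Rabs_minus_sym u). apply H; lra.
Qed.

Definition clamp (a b x : R) := Rmax a (Rmin b x).

Lemma clamp_lip a b x y : a <= b -> Rabs (clamp a b x - clamp a b y) <= Rabs (x - y).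
Proof. intros. unfold clamp, Rmax, Rmin. repeat destruct Rle_dec; unfold Rabs; repeat destruct Rcase_abs; lra. Qed.

Lemma clamp_in a b x : a <= b -> a <= clamp a b x <= b.
Proof. intros. unfold clamp, Rmax, Rmin. repeat destruct Rle_dec; lra. Qed.

Lemma clamp_id a b x : a <= x <= b -> clamp a b x = x.
Proof. intros. unfold clamp, Rmax, Rmin. repeat destruct Rle_dec; lra. Qed.

Lemma cont_sqrtf (W : R -> R) E x : continuity_pt W x ->
  continuity_pt (fun s => sqrt (Rmax (W s - E) 0)) x.
Proof.
  unfold continuity_pt, continue_in, limit1_in, limit_in. intros HW eps Heps.
  destruct (HW (eps * eps)) as [d [Hd Hd']]. nra.
  exists d. split; auto. intros y Hy. specialize (Hd' y Hy).
  simpl in *. unfold R_dist in *.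
  eapply Rle_lt_trans. apply sqrt_lip.
  replace (W y - E - (W x - E)) with (W y - W x) by ring.
  rewrite <- (sqrt_Rsqr eps) by lra. apply sqrt_lt_1_alt. split. apply Rabs_pos. exact Hd'.
Qed.

Lemma ex_RInt_cont (f : R -> R) a b : (forall x, continuity_pt f x) -> ex_RInt f a b.
Proof.
  intros H. apply (@ex_RInt_continuous R_CompleteNormedModule). intros z _. apply continuity_pt_filterlim. apply H.
Qed.

Lemma RInt_bound (g : R -> R) M a b : (forall x, continuity_pt g x) ->
  (forall s, Rabs (g s) <= M) -> Rabs (RInt g a b) <= M * Rabs (b - a).
Proof.
  intros Hc Hb. destruct (Rle_dec a b).
  - rewrite (Rabs_right (b - a)) by lra. rewrite Rmult_comm. apply abs_RInt_le_const.
    lra. apply ex_RInt_cont; auto. intros; auto.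
  - rewrite <- opp_RInt_swap by (apply ex_RInt_cont; auto). unfold opp; simpl. rewrite Rabs_Ropp.
    rewrite (Rabs_left (b - a)) by lra. replace (- (b - a)) with (a - b) by ring.
    rewrite Rmult_comm. apply abs_RInt_le_const. lra. apply ex_RInt_cont; auto. intros; auto.
Qed.

Lemma glb_fin (S : R -> Prop) : (exists r, S r) -> (forall r, S r -> 0 <= r) ->
  (forall r, S r -> real (Glb_Rbar S) <= r) /\
  (forall z, (forall r, S r -> z <= r) -> z <= real (Glb_Rbar S)).
Proof.
  intros [r0 Hr0] Hpos. destruct (Glb_Rbar_correct S) as [lb glb].
  destruct (Glb_Rbar S) as [g| |] eqn:Hg.
  - simpl. split.
    + intros r Hr. exact (lb r Hr).
    + intros z Hz. apply (glb (Finite z)). intros r Hr. simpl. auto.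
  - exfalso. exact (lb r0 Hr0).
  - exfalso. apply (glb (Finite 0)). intros r Hr. simpl. auto.
Qed.

Lemma glb_cmp (S1 S2 : R -> Prop) c : (exists r, S1 r) -> (exists r, S2 r) ->
  (forall r, S1 r -> 0 <= r) -> (forall r, S2 r -> 0 <= r) ->
  (forall r, S1 r -> exists r', S2 r' /\ r' <= r + c) ->
  real (Glb_Rbar S2) <= real (Glb_Rbar S1) + c.
Proof.
  intros N1 N2 P1 P2 H.
  destruct (glb_fin S1 N1 P1) as [_ G1]. destruct (glb_fin S2 N2 P2) as [L2 _].
  assert (real (Glb_Rbar S2) - c <= real (Glb_Rbar S1)); [|lra].
  apply G1. intros r Hr. destruct (H r Hr) as [r' [Hr' Hle]]. specialize (L2 r' Hr'). lra.
Qed.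

Definition Vt (V : R -> R) (L x : R) := V (clamp 0 L x).

Lemma Vt_eq V L x : 0 <= x <= L -> Vt V L x = V x.
Proof. intros. unfold Vt. rewrite clamp_id; auto. Qed.

Lemma Vt_cont V L : 0 < L -> cont_on_0L V L -> forall x, continuity_pt (Vt V L) x.
Proof.
  intros HL HV x. unfold continuity_pt, continue_in, limit1_in, limit_in. intros eps Heps.
  destruct (HV (clamp 0 L x) (clamp_in 0 L x ltac:(lra)) eps Heps) as [d [Hd Hd']].
  exists d. split; auto. intros y [_ Hy]. simpl in *. unfold R_dist in *. unfold Vt.
  apply Hd'. apply clamp_in; lra. eapply Rle_lt_trans. apply clamp_lip; lra. auto.
Qed.

Lemma cont_shift (W : R -> R) c : (forall x, continuity_pt W x) ->
  forall x, continuity_pt (fun x => W (x + c)) x.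
Proof.
  intros HW x. unfold continuity_pt, continue_in, limit1_in, limit_in. intros eps Heps.
  destruct (HW (x + c) eps Heps) as [d [Hd Hd']].
  exists d. split; auto. intros y [[_ Hne] Hy]. simpl in *. unfold R_dist in *.
  apply Hd'. split. split. exact I. intro; apply Hne; lra. replace (y + c - (x + c)) with (y - x) by ring. auto.
Qed.


Lemma xm_spec L V x0 E : 0 < L -> cont_on_0L V L -> 0 < x0 < L -> E0 V x0 <= E ->
  0 <= x_minus V x0 E <= x0 /\ V (x_minus V x0 E) <= E /\
  (0 < x_minus V x0 E -> V (x_minus V x0 E) = E).
Proof.
  intros HL HV Hx0 HE. unfold E0 in HE. unfold x_minus. destruct (Rle_dec E (V 0)) as [H0|H0].
  - assert (Hex: exists x, 0 <= x <= x0 /\ V x = E).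
    { assert (Hc: continuity (fun x => Vt V L x - E)).
      { intro x. apply continuity_pt_minus. apply Vt_cont; auto. apply continuity_pt_const. intros a b; auto. }
      destruct (IVT_cor _ 0 x0 Hc ltac:(lra)) as [z [Hz Hz']].
      { rewrite !Vt_eq by lra. nra. }
      exists z. split; auto. rewrite Vt_eq in Hz' by lra. lra. }
    destruct (epsilon_spec (inhabits 0) _ Hex) as [H1 H2]. rewrite H2. repeat split; lra.
  - repeat split; lra.
Qed.

Lemma xp_spec L V x0 E : 0 < L -> cont_on_0L V L -> 0 < x0 < L -> E0 V x0 <= E ->
  x0 <= x_plus V L x0 E <= L /\ V (x_plus V L x0 E) <= E /\
  (x_plus V L x0 E < L -> V (x_plus V L x0 E) = E).
Proof.
  intros HL HV Hx0 HE. unfold E0 in HE. unfold x_plus. destruct (Rle_dec E (V L)) as [H0|H0].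
  - assert (Hex: exists x, x0 <= x <= L /\ V x = E).
    { assert (Hc: continuity (fun x => Vt V L x - E)).
      { intro x. apply continuity_pt_minus. apply Vt_cont; auto. apply continuity_pt_const. intros a b; auto. }
      destruct (IVT_cor _ x0 L Hc ltac:(lra)) as [z [Hz Hz']].
      { rewrite !Vt_eq by lra. nra. }
      exists z. split; auto. rewrite Vt_eq in Hz' by lra. lra. }
    destruct (epsilon_spec (inhabits 0) _ Hex) as [H1 H2]. rewrite H2. repeat split; lra.
  - repeat split; lra.
Qed.

Lemma K_between L V x0 E y : 0 < L -> cont_on_0L V L -> 0 < x0 < L ->
  strict_decr_on V 0 x0 -> strict_incr_on V x0 L -> E0 V x0 <= E ->
  (K_E V L E y <-> x_minus V x0 E <= y <= x_plus V L x0 E).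
Proof.
  intros HL HV Hx0 Hdec Hinc HE.
  destruct (xm_spec L V x0 E HL HV Hx0 HE) as [Hm1 [Hm2 Hm3]].
  destruct (xp_spec L V x0 E HL HV Hx0 HE) as [Hp1 [Hp2 Hp3]].
  unfold K_E. split.
  - intros [Hy HVy]. split.
    + destruct (Rle_dec (x_minus V x0 E) y) as [|Hn]; auto. exfalso.
      rewrite Hm3 in *. 2: lra.
      generalize (Hdec y (x_minus V x0 E) ltac:(lra) ltac:(lra) ltac:(lra)). lra.
    + destruct (Rle_dec y (x_plus V L x0 E)) as [|Hn]; auto. exfalso.
      generalize (Hinc (x_plus V L x0 E) y ltac:(lra) ltac:(lra) ltac:(lra)).
      rewrite Hp3 by lra. lra.
  - intros Hy. split. lra.
    destruct (Rle_dec y x0).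
    + destruct (Req_dec y (x_minus V x0 E)) as [->|Hne]; auto.
      generalize (Hdec (x_minus V x0 E) y ltac:(lra) ltac:(lra) ltac:(lra)). lra.
    + destruct (Req_dec y (x_plus V L x0 E)) as [->|Hne]; auto.
      generalize (Hinc y (x_plus V L x0 E) ltac:(lra) ltac:(lra) ltac:(lra)). lra.
Qed.

Lemma uc_xm L V x0 : 0 < L -> cont_on_0L V L -> 0 < x0 < L ->
  strict_decr_on V 0 x0 ->
  forall eps, 0 < eps -> exists delta, 0 < delta /\
     forall E E', E0 V x0 <= E -> E0 V x0 <= E' -> Rabs (E - E') < delta ->
       Rabs (x_minus V x0 E - x_minus V x0 E') < eps.
Proof.
  intros HL HV Hx0 Hdec eps Heps.
  destruct (Rle_dec eps x0) as [Hle|Hlt].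
  2: { exists 1. split. lra. intros E E' HE HE' _.
       destruct (xm_spec L V x0 E HL HV Hx0 HE) as [H1 _].
       destruct (xm_spec L V x0 E' HL HV Hx0 HE') as [H2 _].
       unfold Rabs; destruct Rcase_abs; lra. }
  pose (g := fun x => Vt V L x - Vt V L (x + eps)).
  destruct (continuity_ab_min g 0 (x0 - eps) ltac:(lra)) as [mx [Hmin Hmx]].
  { intros c _. unfold g. apply continuity_pt_minus. apply Vt_cont; auto.
    apply (cont_shift (Vt V L) eps (Vt_cont V L HL HV)). }
  assert (Hgpos: forall x, 0 <= x <= x0 - eps -> g x = V x - V (x + eps)).
  { intros x Hx. unfold g. rewrite !Vt_eq by lra. auto. }
  exists (g mx). split.
  { rewrite Hgpos by lra. generalize (Hdec mx (mx + eps) ltac:(lra) ltac:(lra) ltac:(lra)). lra. }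
  assert (H1: forall E E', E0 V x0 <= E -> E0 V x0 <= E' ->
     x_minus V x0 E + eps <= x_minus V x0 E' -> g mx <= E - E').
  { intros E E' HE HE' Hab.
    destruct (xm_spec L V x0 E HL HV Hx0 HE) as [Ha1 [Ha2 Ha3]].
    destruct (xm_spec L V x0 E' HL HV Hx0 HE') as [Hb1 [Hb2 Hb3]].
    set (a := x_minus V x0 E) in *. set (b := x_minus V x0 E') in *.
    assert (Vb: V b = E') by (apply Hb3; lra).
    assert (Hv: V b <= V (a + eps)).
    { destruct (Req_dec b (a + eps)) as [->|Hne]. lra.
      generalize (Hdec (a + eps) b ltac:(lra) ltac:(lra) ltac:(lra)). lra. }
    generalize (Hmin a ltac:(lra)). rewrite (Hgpos a) by lra. lra. }
  intros E E' HE HE' Hd.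
  destruct (Rlt_dec (Rabs (x_minus V x0 E - x_minus V x0 E')) eps) as [|Hn]; auto.
  exfalso. revert Hd Hn. unfold Rabs. destruct Rcase_abs; destruct Rcase_abs; intros Hd Hn;
    first [generalize (H1 E E' HE HE'); lra | generalize (H1 E' E HE' HE); lra].
Qed.

Lemma uc_xp L V x0 : 0 < L -> cont_on_0L V L -> 0 < x0 < L ->
  strict_incr_on V x0 L ->
  forall eps, 0 < eps -> exists delta, 0 < delta /\
     forall E E', E0 V x0 <= E -> E0 V x0 <= E' -> Rabs (E - E') < delta ->
       Rabs (x_plus V L x0 E - x_plus V L x0 E') < eps.
Proof.
  intros HL HV Hx0 Hinc eps Heps.
  destruct (Rle_dec eps (L - x0)) as [Hle|Hlt].
  2: { exists 1. split. lra. intros E E' HE HE' _.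
       destruct (xp_spec L V x0 E HL HV Hx0 HE) as [H1 _].
       destruct (xp_spec L V x0 E' HL HV Hx0 HE') as [H2 _].
       unfold Rabs; destruct Rcase_abs; lra. }
  pose (g := fun x => Vt V L (x + eps) - Vt V L x).
  destruct (continuity_ab_min g x0 (L - eps) ltac:(lra)) as [mx [Hmin Hmx]].
  { intros c _. unfold g. apply continuity_pt_minus.
    apply (cont_shift (Vt V L) eps (Vt_cont V L HL HV)). apply Vt_cont; auto. }
  assert (Hgpos: forall x, x0 <= x <= L - eps -> g x = V (x + eps) - V x).
  { intros x Hx. unfold g. rewrite !Vt_eq by lra. auto. }
  exists (g mx). split.
  { rewrite Hgpos by lra. generalize (Hinc mx (mx + eps) ltac:(lra) ltac:(lra) ltac:(lra)). lra. }
  assert (H1: forall E E', E0 V x0 <= E -> E0 V x0 <= E' ->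
     x_plus V L x0 E' + eps <= x_plus V L x0 E -> g mx <= E - E').
  { intros E E' HE HE' Hab.
    destruct (xp_spec L V x0 E HL HV Hx0 HE) as [Ha1 [Ha2 Ha3]].
    destruct (xp_spec L V x0 E' HL HV Hx0 HE') as [Hb1 [Hb2 Hb3]].
    set (a := x_plus V L x0 E) in *. set (b := x_plus V L x0 E') in *.
    assert (Vb: V b = E') by (apply Hb3; lra).
    assert (Hv: V (b + eps) <= V a).
    { destruct (Req_dec a (b + eps)) as [->|Hne]. lra.
      generalize (Hinc (b + eps) a ltac:(lra) ltac:(lra) ltac:(lra)). lra. }
    generalize (Hmin b ltac:(lra)). rewrite (Hgpos b) by lra. lra. }
  intros E E' HE HE' Hd.
  destruct (Rlt_dec (Rabs (x_plus V L x0 E - x_plus V L x0 E')) eps) as [|Hn]; auto.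
  exfalso. revert Hd Hn. unfold Rabs. destruct Rcase_abs; destruct Rcase_abs; intros Hd Hn;
    first [generalize (H1 E E' HE HE'); lra | generalize (H1 E' E HE' HE); lra].
Qed.

Definition fE (W : R -> R) (E s : R) := sqrt (Rmax (W s - E) 0).
Definition Sset V L E x r := exists y, K_E V L E y /\ r = Rabs (RInt (fE (Vt V L) E) y x).

Lemma dA_raw_eq V L E x : 0 <= x <= L -> dA_raw V L E x = real (Glb_Rbar (Sset V L E x)).
Proof.
  intros Hx. unfold dA_raw. f_equal. apply Glb_Rbar_eqset. intros r.
  split; intros [y [Hy ->]]; exists y; split; auto; f_equal; apply RInt_ext;
  intros s Hs; unfold fE; rewrite Vt_eq; auto;
  destruct Hy as [Hy _]; unfold Rmin, Rmax in Hs; destruct Rle_dec; lra.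
Qed.

Lemma main_est L V x0 M : 0 < L -> cont_on_0L V L -> 0 < x0 < L ->
  strict_decr_on V 0 x0 -> strict_incr_on V x0 L ->
  (forall E s, E0 V x0 <= E -> Rabs (fE (Vt V L) E s) <= M) ->
  forall E1 E2 x1 x2 W, E0 V x0 <= E1 -> E0 V x0 <= E2 -> 0 <= x1 <= L -> 0 <= x2 <= L ->
  Rabs (x_minus V x0 E1 - x_minus V x0 E2) <= W ->
  Rabs (x_plus V L x0 E1 - x_plus V L x0 E2) <= W ->
  dA_raw V L E2 x2 <= dA_raw V L E1 x1 + (M * W + L * sqrt (Rabs (E1 - E2)) + M * Rabs (x1 - x2)).
Proof.
  intros HL HV Hx0 Hdec Hinc HM E1 E2 x1 x2 W HE1 HE2 Hx1 Hx2 HWm HWp.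
  assert (HM0: 0 <= M) by (eapply Rle_trans; [apply Rabs_pos| apply (HM E1 0 HE1)]).
  assert (Hc: forall E x, continuity_pt (fE (Vt V L) E) x).
  { intros E x. apply cont_sqrtf. apply Vt_cont; auto. }
  assert (Hex: forall E a b, ex_RInt (fE (Vt V L) E) a b).
  { intros. apply ex_RInt_cont. auto. }
  rewrite !dA_raw_eq by auto.
  assert (Hne: forall E x, E0 V x0 <= E -> exists r, Sset V L E x r).
  { intros E x HE. eexists. exists x0. split. split. lra. exact HE. reflexivity. }
  assert (Hpos: forall E x r, Sset V L E x r -> 0 <= r).
  { intros E x r [y [_ ->]]. apply Rabs_pos. }
  apply glb_cmp; [apply Hne; auto | apply Hne; auto | apply Hpos | apply Hpos | ].
  intros r [y1 [Hy1 ->]].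
  apply (K_between L V x0 E1 y1 HL HV Hx0 Hdec Hinc HE1) in Hy1.
  destruct (xm_spec L V x0 E2 HL HV Hx0 HE2) as [Ha2 _].
  destruct (xp_spec L V x0 E2 HL HV Hx0 HE2) as [Hb2 _].
  destruct (xm_spec L V x0 E1 HL HV Hx0 HE1) as [Ha1 _].
  destruct (xp_spec L V x0 E1 HL HV Hx0 HE1) as [Hb1 _].
  set (y2 := clamp (x_minus V x0 E2) (x_plus V L x0 E2) y1).
  assert (Hy2: x_minus V x0 E2 <= y2 <= x_plus V L x0 E2) by (apply clamp_in; lra).
  assert (Hyy: Rabs (y1 - y2) <= W).
  { revert HWm HWp. unfold y2, clamp, Rmax, Rmin. unfold Rabs.
    repeat destruct Rle_dec; repeat destruct Rcase_abs; lra. }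
  exists (Rabs (RInt (fE (Vt V L) E2) y2 x2)). split.
  { exists y2. split; auto. apply (K_between L V x0 E2 y2 HL HV Hx0 Hdec Hinc HE2). auto. }
  set (f1 := fE (Vt V L) E1). set (f2 := fE (Vt V L) E2).
  assert (Ch: RInt f2 y2 x2 = RInt f2 y2 y1 + (RInt f2 y1 x1 + RInt f2 x1 x2)).
  { rewrite <- (RInt_Chasles f2 y2 y1 x2) by apply Hex.
    rewrite <- (RInt_Chasles f2 y1 x1 x2) by apply Hex. reflexivity. }
  assert (Hmin: RInt (fun s => f2 s - f1 s) y1 x1 = RInt f2 y1 x1 - RInt f1 y1 x1).
  { exact (RInt_minus f2 f1 y1 x1 (Hex _ _ _) (Hex _ _ _)). }
  assert (B1: Rabs (RInt f2 y2 y1) <= M * Rabs (y1 - y2)).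
  { apply RInt_bound; [intros x; apply Hc | intros s; apply HM; auto]. }
  assert (B2: Rabs (RInt f2 x1 x2) <= M * Rabs (x2 - x1)).
  { apply RInt_bound; [intros x; apply Hc | intros s; apply HM; auto]. }
  assert (B3: Rabs (RInt (fun s => f2 s - f1 s) y1 x1) <= sqrt (Rabs (E1 - E2)) * Rabs (x1 - y1)).
  { apply RInt_bound.
    - intros x. apply continuity_pt_minus; apply Hc.
    - intros s. unfold f1, f2, fE. eapply Rle_trans. apply sqrt_lip.
      replace (Vt V L s - E2 - (Vt V L s - E1)) with (E1 - E2) by ring. lra. }
  assert (Hxy: Rabs (x1 - y1) <= L) by (unfold Rabs; destruct Rcase_abs; lra).
  assert (S1: M * Rabs (y1 - y2) <= M * W) by (apply Rmult_le_compat_l; auto).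
  assert (S3: sqrt (Rabs (E1 - E2)) * Rabs (x1 - y1) <= L * sqrt (Rabs (E1 - E2))).
  { rewrite Rmult_comm. apply Rmult_le_compat_r; auto. apply sqrt_pos. }
  rewrite (Rabs_minus_sym x2 x1) in B2.
  rewrite Hmin in B3. rewrite Ch.
  generalize (Rabs_triang (RInt f2 y2 y1) (RInt f2 y1 x1 + RInt f2 x1 x2)).
  generalize (Rabs_triang (RInt f2 y1 x1) (RInt f2 x1 x2)).
  generalize (Rabs_triang_inv (RInt f2 y1 x1) (RInt f1 y1 x1)).
  lra.
Qed.

Lemma dA_eq V L x0 E x : dA V L x0 E x = dA_raw V L (Rmax (E0 V x0) E) x.
Proof. unfold dA, Rmax. destruct Rle_dec; reflexivity. Qed.

Lemma Rmax_lip a E E' : Rabs (Rmax a E - Rmax a E') <= Rabs (E - E').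
Proof. unfold Rmax. repeat destruct Rle_dec; unfold Rabs; repeat destruct Rcase_abs; lra. Qed.

Theorem lemma2p1 (L : R) (V : R -> R) (x0 : R)
  (HL : 0 < L) (HV : cont_on_0L V L) (Hx0 : 0 < x0 < L)
  (Hdec : strict_decr_on V 0 x0) (Hinc : strict_incr_on V x0 L) :
  (* x_- and x_+ are uniformly continuous on [E0, oo) *)
  (forall eps, 0 < eps -> exists delta, 0 < delta /\
     forall E E', E0 V x0 <= E -> E0 V x0 <= E' -> Rabs (E - E') < delta ->
       Rabs (x_minus V x0 E - x_minus V x0 E') < eps) /\
  (forall eps, 0 < eps -> exists delta, 0 < delta /\
     forall E E', E0 V x0 <= E -> E0 V x0 <= E' -> Rabs (E - E') < delta ->
       Rabs (x_plus V L x0 E - x_plus V L x0 E') < eps) /\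
  (* (E, x) |-> d_{A,E}(x) is uniformly continuous on R x [0,L] *)
  (forall eps, 0 < eps -> exists delta, 0 < delta /\
     forall E E' x x', 0 <= x <= L -> 0 <= x' <= L ->
       Rabs (E - E') < delta -> Rabs (x - x') < delta ->
       Rabs (dA V L x0 E x - dA V L x0 E' x') < eps) /\
  (* uniform Lipschitz bound *)
  (exists C, 0 < C /\ forall E x y, 0 <= x <= L -> 0 <= y <= L ->
       Rabs (dA V L x0 E x - dA V L x0 E y) <= C * Rabs (x - y)).
Proof.
  destruct (continuity_ab_maj (Vt V L) 0 L ltac:(lra)) as [Mx [HMx _]].
  { intros; apply Vt_cont; auto. }
  assert (HVt: forall s, Vt V L s <= Vt V L Mx).
  { intros s. assert (Hc := clamp_in 0 L s ltac:(lra)).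
    replace (Vt V L s) with (Vt V L (clamp 0 L s)). apply HMx; auto.
    rewrite Vt_eq by auto. reflexivity. }
  set (M := sqrt (Rmax (Vt V L Mx - E0 V x0) 0) + 1).
  assert (HMp: 0 < M) by (unfold M; generalize (sqrt_pos (Rmax (Vt V L Mx - E0 V x0) 0)); lra).
  assert (HM: forall E s, E0 V x0 <= E -> Rabs (fE (Vt V L) E s) <= M).
  { intros E s HE. unfold fE. rewrite Rabs_right by (apply Rle_ge, sqrt_pos).
    unfold M. assert (sqrt (Rmax (Vt V L s - E) 0) <= sqrt (Rmax (Vt V L Mx - E0 V x0) 0)); [|lra].
    apply sqrt_le_1_alt. generalize (HVt s). unfold Rmax; repeat destruct Rle_dec; lra. }
  assert (ME := main_est L V x0 M HL HV Hx0 Hdec Hinc HM).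
  split; [exact (uc_xm L V x0 HL HV Hx0 Hdec)|].
  split; [exact (uc_xp L V x0 HL HV Hx0 Hinc)|].
  split.
  - intros eps Heps. set (e3 := eps / 3). assert (He3: 0 < e3) by (unfold e3; lra).
    assert (HeM: 0 < e3 / M) by (apply Rdiv_lt_0_compat; lra).
    destruct (uc_xm L V x0 HL HV Hx0 Hdec (e3 / M) HeM) as [dm [Hdm Hm]].
    destruct (uc_xp L V x0 HL HV Hx0 Hinc (e3 / M) HeM) as [dp [Hdp Hp]].
    set (t := e3 / (L + 1)). assert (Ht: 0 < t) by (apply Rdiv_lt_0_compat; lra).
    exists (Rmin (Rmin dm dp) (Rmin (e3 / M) (t * t))). split.
    { repeat apply Rmin_glb_lt; nra. }
    intros E E' x x' Hx Hx' HE Hxx.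
    assert (Hd1 := Rmin_l (Rmin dm dp) (Rmin (e3 / M) (t * t))).
    assert (Hd2 := Rmin_r (Rmin dm dp) (Rmin (e3 / M) (t * t))).
    assert (Hd3 := Rmin_l dm dp). assert (Hd4 := Rmin_r dm dp).
    assert (Hd5 := Rmin_l (e3 / M) (t * t)). assert (Hd6 := Rmin_r (e3 / M) (t * t)).
    rewrite !dA_eq.
    set (F := Rmax (E0 V x0) E). set (F' := Rmax (E0 V x0) E').
    assert (HF: E0 V x0 <= F) by apply Rmax_l. assert (HF': E0 V x0 <= F') by apply Rmax_l.
    assert (HFF: Rabs (F - F') < Rmin (Rmin dm dp) (Rmin (e3 / M) (t * t)))
      by (eapply Rle_lt_trans; [apply Rmax_lip|exact HE]).
    assert (W1: Rabs (x_minus V x0 F - x_minus V x0 F') <= e3 / M) by (left; apply Hm; auto; lra).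
    assert (W2: Rabs (x_plus V L x0 F - x_plus V L x0 F') <= e3 / M) by (left; apply Hp; auto; lra).
    assert (A := ME F F' x x' (e3 / M) HF HF' Hx Hx' W1 W2).
    rewrite (Rabs_minus_sym (x_minus _ _ F)) in W1. rewrite (Rabs_minus_sym (x_plus _ _ _ F)) in W2.
    assert (B := ME F' F x' x (e3 / M) HF' HF Hx' Hx W1 W2).
    rewrite (Rabs_minus_sym F') in B. rewrite (Rabs_minus_sym x') in B.
    assert (C1: M * (e3 / M) = e3) by (field; lra).
    assert (Hs: sqrt (Rabs (F - F')) < t).
    { rewrite <- (sqrt_square t) by lra. apply sqrt_lt_1_alt. split. apply Rabs_pos. lra. }
    assert (C2: L * sqrt (Rabs (F - F')) < e3).
    { assert (L * t < e3) by (unfold t; apply (Rmult_lt_reg_r (L + 1)); [lra|];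
        field_simplify; lra).
      generalize (sqrt_pos (Rabs (F - F'))); nra. }
    assert (C3: M * Rabs (x - x') < e3).
    { rewrite <- C1. apply Rmult_lt_compat_l; lra. }
    rewrite C1 in A, B. unfold e3 in *.
    unfold Rabs at 1. destruct Rcase_abs; lra.
  - exists M. split; auto. intros E x y Hx Hy. rewrite !dA_eq.
    set (F := Rmax (E0 V x0) E). assert (HF: E0 V x0 <= F) by apply Rmax_l.
    assert (W: forall f : R -> R, Rabs (f F - f F) <= 0).
    { intros f. rewrite Rminus_diag, Rabs_R0. lra. }
    assert (A := ME F F x y 0 HF HF Hx Hy (W _) (W _)).
    assert (B := ME F F y x 0 HF HF Hy Hx (W _) (W _)).
    rewrite Rminus_diag, Rabs_R0, sqrt_0 in A, B. rewrite (Rabs_minus_sym y) in B.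
    unfold Rabs at 1. destruct Rcase_abs; lra.
Qed.
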